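(* Let $\lambda\in(0,r^\alpha)$ and consider the $\lambda$-NRW on the augmented tree with horizontal conductances $c(\mathbf x,\mathbf y)=r^{\alpha|\mathbf x|}\lambda^{-|\mathbf x|}$. Then for any two closed subsets $\Phi,\Psi\subset K$, the limit $\lim_{n\to\infty}R_n^{(\lambda)}(\Phi,\Psi)$ exists and is independent of the choice of the $\kappa$-sequence.
   Context: Let $\{S_i\}_{i=1}^N$ ($N\ge2$) be contractive similitudes of $\mathbb R^d$ with ratios $r_i\in(0,1)$ satisfying the open set condition; $K$ the self-similar set, $\alpha$ its Hausdorff dimension ($\sum_ir_i^\alpha=1$), $r=\min_ir_i$. $\Sigma^*$ finite words over $\{1,\dots,N\}$ with empty word $\vartheta$, $S_{\mathbf x}=S_{i_1}\circ\cdots\circ S_{i_k}$, $r_{\mathbf x}=r_{i_1}\cdots r_{i_k}$. $\mathcal J_0=\{\vartheta\}$, $\mathcal J_n=\{i_1\cdots i_k: r_{i_1\cdots i_k}\le r^n<r_{i_1\cdots i_{k-1}}\}$, $X=\bigcup_n\mathcal J_n$, $X_n=\bigcup_{k=0}^n\mathcal J_k$, $|\mathbf x|=n$ on $\mathcal J_n$, parent $\mathbf x^-$ = prefix of $\mathbf x$ in $\mathcal J_{n-1}$. Edges: vertical $\{\mathbf x,\mathbf x^-\}$, horizontal $\{\mathbf x,\mathbf y\}$ for $\mathbf x\ne\mathbf y\in\mathcal J_n$ with $\inf_{\xi,\eta\in K}|S_{\mathbf x}(\xi)-S_{\mathbf y}(\eta)|\le\gamma r^n$ ($\gamma>0$ fixed).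 The $\lambda$-NRW has symmetric conductances $c(\mathbf x,\mathbf x^-)=r_{\mathbf x}^\alpha\lambda^{-|\mathbf x|}$, $c(\mathbf x,\mathbf y)=r^{\alpha|\mathbf x|}\lambda^{-|\mathbf x|}$ on horizontal edges, zero off edges; $X_n$ carries the restricted conductances and energy $\mathcal E_{X_n}[f]=\frac12\sum_{\mathbf x,\mathbf y\in X_n}c(\mathbf x,\mathbf y)(f(\mathbf x)-f(\mathbf y))^2$. Effective resistance: for disjoint nonempty $E,F\subset X_n$, $R_{X_n}(E,F)=(\min\{\mathcal E_{X_n}[f]: f=1$ on $E$, $f=0$ on $F\})^{-1}$, and $R_{X_n}(E,F)=0$ if $E\cap F\ne\emptyset$. A geodesic ray is $(\mathbf x_n)_{n\ge0}$, $\mathbf x_n\in\mathcal J_n$, each a prefix of the next; it converges to $\xi\in K$ if $\xi\in S_{\mathbf x_n}(K)$ for all $n$. A $\kappa$-sequence is a family of maps $\kappa_n:K\to\mathcal J_n$ such that for each $\xi\in K$, $(\kappa_n(\xi))_n$ is a geodesic ray converging to $\xi$. The level-$n$ resistance is $R^{(\lambda)}_n(\Phi,\Psi)=R_{X_n}(\kappa_n(\Phi),\kappa_n(\Psi))$. *)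

(* Defs.v *)
From HB Require Import structures.
From mathcomp Require Import all_boot all_order all_algebra.
From mathcomp Require Import all_classical all_reals all_analysis.
Set Implicit Arguments. Unset Strict Implicit. Unset Printing Implicit Defensive.
Import Order.TTheory GRing.Theory Num.Theory.
Import numFieldNormedType.Exports.
Local Open Scope ring_scope.
Local Open Scope classical_set_scope.

Section NRW.
Variables (R : realType) (d N : nat).
Notation pt := 'rV[R]_d.

Definition edist (x y : pt) : R :=
  Num.sqrt (\sum_(i < d) (x ord0 i - y ord0 i) ^+ 2).

Definition ebounded (A : set pt) : Prop :=
  exists M : R, forall x y, A x -> A y -> edist x y <= M.

Definition similitude (f : pt -> pt) (c : R) : Prop :=
  forall x y, edist (f x) (f y) = c * edist x y.

Variable S : 'I_N -> pt -> pt.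
Variable ri : 'I_N -> R.

Definition OSC : Prop :=
  exists V : set pt, open V /\ V !=set0 /\ ebounded V /\
    (forall i, S i @` V `<=` V) /\
    (forall i j, i != j -> S i @` V `&` S j @` V = set0).

Definition self_similar_set (K : set pt) : Prop :=
  K !=set0 /\ compact K /\ K = \bigcup_i (S i @` K).

Definition rw (w : seq 'I_N) : R := \prod_(i <- w) ri i.
Definition Sw (w : seq 'I_N) : pt -> pt := foldr (fun i g => S i \o g) id w.
Definition rmin : R := \big[Num.min/1]_(i < N) ri i.

Definition inJ (n : nat) (w : seq 'I_N) : Prop :=
  if n is 0 then w = [::]
  else w <> [::] /\ rw w <= rmin ^+ n /\ rmin ^+ n < rw (take (size w).-1 w).

(* vertices are pairs (n, w) with w \in J_n; |(n,w)| = n *)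
Definition vertex := (nat * seq 'I_N)%type.

Definition inX (n : nat) : set vertex :=
  [set v | (v.1 <= n)%N /\ inJ v.1 v.2].

Definition vert (u v : vertex) : Prop :=
  u.1 = v.1.+1 /\ inJ u.1 u.2 /\ inJ v.1 v.2 /\ prefix v.2 u.2.

Variables (K : set pt) (alpha gamma lambda : R).

Definition horiz (u v : vertex) : Prop :=
  u.1 = v.1 /\ u.2 <> v.2 /\ inJ u.1 u.2 /\ inJ v.1 v.2 /\
  (* inf_{xi, eta in K} |S_u xi - S_v eta| <= gamma r^n *)
  (forall e : R, 0 < e -> exists xi eta, K xi /\ K eta /\
     edist (Sw u.2 xi) (Sw v.2 eta) < gamma * rmin ^+ u.1 + e).

Definition cond (u v : vertex) : R :=
  if `[< vert u v >] then rw u.2 `^ alpha * lambda ^- u.1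
  else if `[< vert v u >] then rw v.2 `^ alpha * lambda ^- v.1
  else if `[< horiz u v >] then (rmin `^ alpha) ^+ u.1 * lambda ^- u.1
  else 0.

Definition energy (n : nat) (f : vertex -> R) : R :=
  2^-1 * \sum_(u \in inX n) \sum_(v \in inX n) cond u v * (f u - f v) ^+ 2.

Definition admissible (E F : set vertex) : set (vertex -> R) :=
  [set f | (forall x, E x -> f x = 1) /\ (forall x, F x -> f x = 0)].

Definition Reff (n : nat) (E F : set vertex) : R :=
  if `[< E `&` F !=set0 >] then 0
  else (inf [set energy n f | f in admissible E F])^-1.

Definition kappa_seq (kappa : nat -> pt -> seq 'I_N) : Prop :=
  forall xi, K xi -> forall n,
    inJ n (kappa n xi) /\ prefix (kappa n xi) (kappa n.+1 xi) /\
    (Sw (kappa n xi) @` K) xi.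

Definition Rlevel (kappa : nat -> pt -> seq 'I_N) (n : nat)
    (Phi Psi : set pt) : R :=
  Reff n ((fun xi => (n, kappa n xi)) @` Phi) ((fun xi => (n, kappa n xi)) @` Psi).

End NRW.

(* Main.v *)
Require Import Defs.
From HB Require Import structures.
From mathcomp Require Import all_boot all_order all_algebra.
From mathcomp Require Import all_classical all_reals all_analysis.
From mathcomp Require Import ring lra.
Set Implicit Arguments. Unset Strict Implicit. Unset Printing Implicit Defensive.
Import Order.TTheory GRing.Theory Num.Theory.
Import numFieldNormedType.Exports.
Local Open Scope ring_scope.
Local Open Scope classical_set_scope.

Section Words.
Variables (R : realType) (N : nat) (ri : 'I_N -> R).
Hypothesis ri01 : forall i, 0 < ri i < 1.

Lemma rw_nil : rw ri [::] = 1.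
Proof. by rewrite /rw big_nil. Qed.

Lemma rw_rcons s i : rw ri (rcons s i) = rw ri s * ri i.
Proof. by rewrite /rw -cats1 big_cat big_seq1. Qed.

Lemma rw_cons s i : rw ri (i :: s) = ri i * rw ri s.
Proof. by rewrite /rw big_cons. Qed.

Lemma rw_gt0 s : 0 < rw ri s.
Proof. elim: s => [|i s IH]; first by rewrite rw_nil.
rewrite rw_cons mulr_gt0 //; by case/andP: (ri01 i). Qed.

Lemma rmin_le i : rmin ri <= ri i.
Proof. exact: bigmin_le. Qed.

Lemma rmin_gt0 : 0 < rmin ri.
Proof. apply: lt_bigmin => // i _; by case/andP: (ri01 i). Qed.

Lemma rmin_le1 : rmin ri <= 1.
Proof. exact: bigmin_le_id. Qed.

Definition Mx := \big[Num.max/0]_(i < N) ri i.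

Lemma Mx_lt1 : Mx < 1.
Proof. apply: bigmax_lt => // i _; by case/andP: (ri01 i). Qed.

Lemma Mx_ge0 : 0 <= Mx.
Proof. exact: bigmax_ge_id. Qed.

Lemma rw_leMx s : rw ri s <= Mx ^+ size s.
Proof.
elim: s => [|i s IH]; first by rewrite rw_nil expr0.
rewrite rw_cons /= exprS; apply: ler_pM => //.
- by case/andP: (ri01 i) => /ltW.
- exact/ltW/rw_gt0.
- exact: le_bigmax.
Qed.

Lemma inJ_nil n w : inJ ri n w -> w = [::] -> n = 0%N.
Proof. by case: n => // n /= [wn _] /wn. Qed.

Lemma inJ_lb n w : inJ ri n w -> rmin ri ^+ n.+1 <= rw ri w.
Proof.
case: n => [/= ->|n /= [wn [_ H]]].
  by rewrite rw_nil expr1 rmin_le1.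
case/lastP: w wn H => [//|s x] _.
rewrite size_rcons /= -cats1 take_size_cat // => H.
rewrite cats1 rw_rcons exprS mulrC; apply: ler_pM.
- exact/exprn_ge0/ltW/rmin_gt0.
- exact/ltW/rmin_gt0.
- exact/ltW.
- exact: rmin_le.
Qed.

Lemma inJ_size n : exists L, forall w, inJ ri n w -> (size w <= L)%N.
Proof.
case: n => [|n]; first by exists 0%N => w /= ->.
have : (GRing.exp Mx : R ^nat) @ \oo --> 0.
  by apply: cvg_expr; rewrite ger0_norm ?Mx_ge0 ?Mx_lt1.
move/cvgr_dist_lt => /(_ (rmin ri ^+ n.+1)).
have hp : 0 < rmin ri ^+ n.+1 by apply/exprn_gt0/rmin_gt0.
move=> /(_ hp) [L _ HL].
exists L => w /= [wn [_ H]].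
rewrite leqNgt; apply/negP => Lw.
have := HL (size w).-1; rewrite /= -ltnS (ltn_predK Lw) => /(_ Lw).
rewrite sub0r normrN ger0_norm ?exprn_ge0 ?Mx_ge0 //.
move=> H2.
have H3 := rw_leMx (take (size w).-1 w).
rewrite size_take ltn_predL lt0n size_eq0 in H3.
have : w != [::] by apply/eqP.
move=> wn'; rewrite wn' in H3.
have := lt_le_trans H H3. by rewrite ltNge (ltW H2).
Qed.

End Words.

Section Fin.
Variables (R : realType) (N : nat) (ri : 'I_N -> R).
Hypothesis ri01 : forall i, 0 < ri i < 1.

Fixpoint allseq (L : nat) : seq (seq 'I_N) :=
  if L is L'.+1 then [::] :: [seq i :: s | i <- enum 'I_N, s <- allseq L']
  else [:: [::]].

Lemma mem_allseq L s : (size s <= L)%N -> s \in allseq L.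
Proof.
elim: L s => [|L IH] [|i s] //=.
rewrite ltnS => Hs; rewrite in_cons; apply/orP; right.
apply/allpairsP; exists (i, s) => /=; split => //; first by rewrite mem_enum.
exact: IH.
Qed.

Lemma inJ_size_unif m : exists L, forall k w, (k <= m)%N -> inJ ri k w -> (size w <= L)%N.
Proof.
elim: m => [|m [L HL]].
  have [L HL] := inJ_size ri01 0.
  by exists L => k w; rewrite leqn0 => /eqP ->; apply: HL.
have [L' HL'] := inJ_size ri01 m.+1.
exists (maxn L L') => k w; rewrite leq_eqVlt => /orP[/eqP ->|km] Hw.
  by rewrite leq_max (HL' _ Hw) orbT.
by rewrite leq_max (HL k w km Hw).
Qed.

Lemma inX_finite m : finite_set (inX ri m).
Proof.
have [L HL] := inJ_size_unif m.
apply: (sub_finite_set _ (finite_seq [seq (k, s) | k <- iota 0 m.+1, s <- allseq L])).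
move=> [k w] [/= km Hw].
change ((k, w) \in [seq (k, s) | k <- iota 0 m.+1, s <- allseq L]).
apply/allpairsP; exists (k, w) => /=; split => //.
  by rewrite -[0%N :: _]/(iota 0 m.+1) mem_iota add0n ltnS km.
exact/mem_allseq/(HL k w km Hw).
Qed.

Lemma inX_mono m m' : (m <= m')%N -> inX ri m `<=` inX ri m'.
Proof. by move=> mm' v [h1 h2]; split => //; apply: leq_trans mm'. Qed.

End Fin.

Section FsumLemmas.
Variables (R : realType) (T : choiceType).

Lemma fsum_sub (A B : set T) (F : T -> R) : finite_set B -> A `<=` B ->
  (forall x, B x -> 0 <= F x) -> \sum_(x \in A) F x <= \sum_(x \in B) F x.
Proof.
move=> Bf AB F0.
have Af : finite_set A by apply: sub_finite_set Bf.
rewrite -(setDUK AB) fsbigU0 //; last 2 first.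
- by apply: sub_finite_set Bf => x [].
- by move=> x [Ax [_ nAx]].
rewrite lerDl; apply: fsumr_ge0 => x [Bx _]; exact: F0.
Qed.

Lemma fsum_le (A : set T) (F G : T -> R) : finite_set A ->
  (forall x, A x -> F x <= G x) -> \sum_(x \in A) F x <= \sum_(x \in A) G x.
Proof.
move=> Af FG; rewrite !fsbig_finite // big_seq [X in _ <= X]big_seq.
by apply: ler_sum => x; rewrite in_fset_set // inE => /FG.
Qed.

Lemma fsum_term (A : set T) (F : T -> R) i : finite_set A -> A i ->
  (forall x, A x -> 0 <= F x) -> F i <= \sum_(x \in A) F x.
Proof.
move=> Af Ai F0; rewrite (fsbigD1 i) //= lerDl.
by apply: fsumr_ge0 => x [/F0].
Qed.

Lemma fsum_mull (A : set T) (F : T -> R) c : finite_set A ->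
  \sum_(x \in A) (c * F x) = c * \sum_(x \in A) F x.
Proof. by move=> Af; rewrite !fsbig_finite // big_distrr. Qed.

End FsumLemmas.

Section Energy.
Variables (R : realType) (d N : nat) (S : 'I_N -> 'rV[R]_d -> 'rV[R]_d)
  (ri : 'I_N -> R) (K : set 'rV[R]_d) (alpha gamma lambda : R).
Hypothesis ri01 : forall i, 0 < ri i < 1.
Hypothesis lam0 : 0 < lambda.

Local Notation c := (cond S ri K alpha gamma lambda).
Local Notation E := (energy S ri K alpha gamma lambda).

Lemma cond_ge0 u v : 0 <= c u v.
Proof.
rewrite /cond.
have lp : forall n, 0 <= lambda ^- n by move=> n; rewrite invr_ge0 exprn_ge0 // ltW.
case: ifP => _; first by rewrite mulr_ge0 // powR_ge0.
case: ifP => _; first by rewrite mulr_ge0 // powR_ge0.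
case: ifP => _ //; by rewrite mulr_ge0 // exprn_ge0 // powR_ge0.
Qed.

Lemma energy_ge0 m f : 0 <= E m f.
Proof.
rewrite /energy mulr_ge0 // fsumr_ge0 // => u _; rewrite fsumr_ge0 // => v _.
by rewrite mulr_ge0 // ?cond_ge0 // sqr_ge0.
Qed.

Lemma energy_edge m f u v : inX ri m u -> inX ri m v ->
  2^-1 * (c u v * (f u - f v) ^+ 2) <= E m f.
Proof.
move=> Hu Hv; rewrite /energy ler_pM2l ?invr_gt0 //.
have Xf := inX_finite ri01 m.
have t0 : forall x y, 0 <= c x y * (f x - f y) ^+ 2.
  by move=> x y; rewrite mulr_ge0 // ?cond_ge0 // sqr_ge0.
apply: (le_trans _ (fsum_term (F := fun x => \sum_(y \in inX ri m) (c x y * (f x - f y) ^+ 2)) Xf Hu _)).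
  exact: fsum_term Xf Hv _.
by move=> x _; rewrite fsumr_ge0.
Qed.

Lemma energy_mono m m' f : (m <= m')%N -> E m f <= E m' f.
Proof.
move=> mm'; rewrite /energy ler_pM2l ?invr_gt0 //.
have Xf := inX_finite ri01 m; have Xf' := inX_finite ri01 m'.
have sub := @inX_mono R N ri _ _ mm'.
have t0 : forall x y, 0 <= c x y * (f x - f y) ^+ 2.
  by move=> x y; rewrite mulr_ge0 // ?cond_ge0 // sqr_ge0.
apply: le_trans (fsum_le (G := fun x => \sum_(y \in inX ri m') (c x y * (f x - f y) ^+ 2)) Xf _) _.
  by move=> x _; apply: fsum_sub.
apply: fsum_sub => // x _; exact: fsumr_ge0.
Qed.

Lemma energy_lip m f g L : 0 <= L ->
  (forall u v, (g u - g v) ^+ 2 <= L * (f u - f v) ^+ 2) -> E m g <= L * E m f.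
Proof.
move=> L0 Hl; rewrite /energy mulrCA ler_pM2l ?invr_gt0 //.
have Xf := inX_finite ri01 m.
rewrite -fsum_mull //; apply: fsum_le => // x _.
rewrite -fsum_mull //; apply: fsum_le => // y _.
rewrite mulrA (mulrC L) -mulrA; apply: ler_wpM2l; [exact: cond_ge0|exact: Hl].
Qed.

End Energy.

Definition clamp01 (R : realType) (y : R) : R :=
  if y <= 0 then 0 else if 1 <= y then 1 else y.

Lemma clamp01_ml (R : realType) (x y : R) : x <= y ->
  0 <= clamp01 y - clamp01 x /\ clamp01 y - clamp01 x <= y - x.
Proof.
rewrite /clamp01 => xy.
case: (lerP x 0) => hx; case: (lerP 1 x) => hx1; case: (lerP y 0) => hy;
  case: (lerP 1 y) => hy1; split; lra.
Qed.

Lemma clamp01_lip (R : realType) (x y : R) :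
  (clamp01 x - clamp01 y) ^+ 2 <= (x - y) ^+ 2.
Proof.
case: (lerP x y) => xy.
  have [h1 h2] := clamp01_ml xy; nra.
have [h1 h2] := clamp01_ml (ltW xy); nra.
Qed.

Section Resist.
Variables (R : realType) (d N : nat) (S : 'I_N -> 'rV[R]_d -> 'rV[R]_d)
  (ri : 'I_N -> R) (K : set 'rV[R]_d) (alpha gamma lambda : R).
Hypothesis ri01 : forall i, 0 < ri i < 1.
Hypothesis lam0 : 0 < lambda.

Local Notation c := (cond S ri K alpha gamma lambda).
Local Notation E := (energy S ri K alpha gamma lambda).
Local Notation Rf := (Reff S ri K alpha gamma lambda).

Definition Cf m (A B : set (vertex N)) := inf [set E m f | f in admissible A B].

Lemma Cf_ge0 m A B : 0 <= Cf m A B.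
Proof.
rewrite /Cf; have [Hne|] := pselect ([set E m f | f in admissible A B] !=set0).
  apply: lb_le_inf => //.
  by move=> y [g _ <-]; apply: energy_ge0.
move=> H; suff -> : [set E m f | f in admissible A B] = set0 by rewrite inf0.
by apply/seteqP; split => // y Hy; apply: H; exists y.
Qed.

Lemma Cf_le m A B f : admissible A B f -> Cf m A B <= E m f.
Proof.
move=> Hf; rewrite /Cf.
have : has_lbound [set E m f | f in admissible A B].
  by exists 0 => y [g _ <-]; apply: energy_ge0.
move/ge_inf => H; apply: H; by exists f.
Qed.

Lemma Cf_ge m A B M : (exists f : vertex N -> R, admissible A B f) ->
  (forall f, admissible A B f -> M <= E m f) -> M <= Cf m A B.
Proof.
move=> [f Hf] HM; apply: lb_le_inf; first by exists (E m f), f.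
by move=> y [g Hg <-]; apply: HM.
Qed.

Lemma Cf_empty m A B : ~ (exists f : vertex N -> R, admissible A B f) -> Cf m A B = 0.
Proof.
move=> H; rewrite /Cf.
suff -> : [set E m f | f in admissible A B] = set0 by rewrite inf0.
by apply/seteqP; split => // y [f Hf _]; apply: H; exists f.
Qed.

Lemma ReffE m A B : Rf m A B = (Cf m A B)^-1.
Proof.
rewrite /Reff; case: asboolP => // [[x [Ax Bx]]].
rewrite Cf_empty ?invr0 // => [[f [H1 H2]]].
by have := H1 x Ax; rewrite H2 // => /eqP; rewrite eq_sym oner_eq0.
Qed.

Lemma Reff_ge0 m A B : 0 <= Rf m A B.
Proof. by rewrite ReffE invr_ge0 Cf_ge0. Qed.

Definition near_set m t (A A' : set (vertex N)) :=
  forall a, A a -> exists a', A' a' /\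
    (a = a' \/ (inX ri m a /\ inX ri m a' /\ 1 <= c a a' * t ^+ 2)).

Lemma near_val m t A A' f : near_set m t A A' -> forall a, A a ->
  exists a', A' a' /\ (f a - f a') ^+ 2 <= 2 * t ^+ 2 * E m f.
Proof.
move=> HA a Aa; have [a' [A'a' [Ha|[Xa [Xa' Hc]]]]] := HA a Aa.
  exists a'; split => //; rewrite Ha subrr expr0n /= mulr_ge0 // ?energy_ge0 //.
  by rewrite mulr_ge0 // sqr_ge0.
exists a'; split => //.
have := energy_edge S K alpha gamma ri01 lam0 f Xa Xa'.
set e := E m f; set x := (f a - f a') ^+ 2 => He.
have x0 : 0 <= x by rewrite sqr_ge0.
have c0 := @cond_ge0 _ _ _ S ri K alpha gamma lambda lam0 a a'.
have t0 : 0 <= t ^+ 2 by rewrite sqr_ge0.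
nra.
Qed.

Lemma transfer m t mu A B A' B' : 0 < t -> 0 < mu ->
  (forall f, admissible A B f -> mu <= E m f) ->
  near_set m t A A' -> near_set m t B B' ->
  Num.sqrt (Rf m A' B') <= Num.sqrt (Rf m A B) + 3 * t.
Proof.
move=> t0 mu0 Hmu HA HB.
set s := Num.sqrt (Rf m A B).
have s0 : 0 <= s by rewrite sqrtr_ge0.
have key : forall f, admissible A' B' f -> 1 <= Num.sqrt (E m f) * (s + 3 * t).
  move=> f [f1 f0].
  set e := E m f; have e0 : 0 <= e by apply: energy_ge0.
  set q := Num.sqrt e; have q0 : 0 <= q by rewrite sqrtr_ge0.
  have qq : q ^+ 2 = e by rewrite sqr_sqrtr.
  set k := Num.sqrt (2 : R); have k0 : 0 <= k by rewrite sqrtr_ge0.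
  have kk : k ^+ 2 = 2 by rewrite sqr_sqrtr.
  have k32 : k <= 3/2 by nra.
  set dl := t * k * q.
  have dl0 : 0 <= dl by rewrite !mulr_ge0 // ltW.
  have dd : dl ^+ 2 = 2 * t ^+ 2 * e by rewrite /dl !exprMn kk qq; ring.
  have tq : 0 <= t * q by rewrite mulr_ge0 // ltW.
  have hk : 2 * dl <= 3 * t * q.
    have -> : 2 * dl = 2 * k * (t * q) by rewrite /dl; ring.
    have -> : 3 * t * q = 3 * (t * q) by ring.
    apply: ler_wpM2r => //; lra.
  have [dsmall|dbig] := ltrP (2 * dl) 1; last by nra.
  pose g v := clamp01 ((f v - dl) / (1 - 2 * dl)).
  have pos : 0 < 1 - 2 * dl by rewrite subr_gt0.
  have gadm : admissible A B g.
    split.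
    - move=> a Aa; have [a' [A'a' H]] := near_val f HA Aa.
      have {}H : (f a - 1) ^+ 2 <= dl ^+ 2 by move: H; rewrite (f1 a' A'a') dd.
      have H2 : 1 - dl <= f a by nra.
      have H3 : 1 <= (f a - dl) / (1 - 2 * dl) by rewrite ler_pdivlMr //; nra.
      by rewrite /g /clamp01 H3 ifF //; apply/negbTE; rewrite -ltNge; apply: lt_le_trans H3.
    - move=> b Bb; have [b' [B'b' H]] := near_val f HB Bb.
      have {}H : (f b - 0) ^+ 2 <= dl ^+ 2 by move: H; rewrite (f0 b' B'b') dd.
      have H2 : f b <= dl by nra.
      have H3 : (f b - dl) / (1 - 2 * dl) <= 0 by rewrite ler_pdivrMr //; nra.
      by rewrite /g /clamp01 H3.
  have Eg : E m g <= (1 - 2 * dl)^-2 * e.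
    apply: energy_lip => //; first by rewrite invr_ge0 exprn_ge0 // ltW.
    move=> u v; apply: le_trans (clamp01_lip _ _) _.
    rewrite -mulrBl exprMn mulrC exprVn /g.
    by have -> : f u - dl - (f v - dl) = f u - f v by ring.
  have Cpos : mu <= Cf m A B by apply: Cf_ge => //; exists g.
  have CE := Cf_le m gadm.
  have ss : s ^+ 2 = (Cf m A B)^-1 by rewrite /s sqr_sqrtr; [exact: ReffE | exact: Reff_ge0].
  have Cg0 : 0 < Cf m A B by apply: lt_le_trans Cpos.
  have Hs : 1 <= s ^+ 2 * Cf m A B by rewrite ss mulVf // gt_eqF.
  have : Cf m A B * (1 - 2 * dl) ^+ 2 <= e.
    rewrite -ler_pdivlMr ?exprn_gt0 //; apply: le_trans CE _; apply: le_trans Eg _.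
    by rewrite mulrC.
  move=> H.
  have H4 : (1 - 2 * dl) ^+ 2 <= (s * q) ^+ 2.
    rewrite exprMn qq; nra.
  have H5 : 1 - 2 * dl <= s * q.
    have sq0 : 0 <= s * q by rewrite mulr_ge0.
    nra.
  nra.
have [[f Hf]|nf] := pselect (exists f : vertex N -> R, admissible A' B' f); last first.
  by rewrite ReffE Cf_empty // invr0 sqrtr0 addr_ge0 // mulr_ge0 // ltW.
have M0 : 0 < (s + 3 * t) ^- 2 by rewrite invr_gt0 exprn_gt0 // ltr_wpDl // mulr_gt0.
have HC : (s + 3 * t) ^- 2 <= Cf m A' B'.
  apply: Cf_ge; first by exists f.
  move=> g Hg; have := key g Hg.
  set q := Num.sqrt (E m g) => H.
  have q0 : 0 <= q by rewrite sqrtr_ge0.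
  have qq : q ^+ 2 = E m g by rewrite sqr_sqrtr // energy_ge0.
  have P0 : 0 < (s + 3 * t) ^+ 2 by rewrite exprn_gt0 // ltr_wpDl // mulr_gt0.
  rewrite -qq -[X in X <= _]div1r ler_pdivrMr //.
  have st0 : 0 <= s + 3 * t by rewrite addr_ge0 // mulr_ge0 // ltW.
  rewrite -exprMn; nra.
have Cp : 0 < Cf m A' B' by apply: lt_le_trans HC.
rewrite ReffE.
have st0 : 0 <= s + 3 * t by rewrite addr_ge0 // mulr_ge0 // ltW.
have -> : s + 3 * t = Num.sqrt ((s + 3 * t) ^+ 2) by rewrite sqrtr_sqr ger0_norm.
apply: ler_wsqrtr.
by rewrite -[X in _ <= X]invrK lef_pV2 ?posrE // ?invr_gt0 //.
Qed.

Lemma Reff_mono m m' mu A B : (m <= m')%N -> 0 < mu ->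
  (forall f, admissible A B f -> mu <= E m f) -> Rf m' A B <= Rf m A B.
Proof.
move=> mm' mu0 Hmu; rewrite !ReffE.
have [[f Hf]|nf] := pselect (exists f : vertex N -> R, admissible A B f); last first.
  by rewrite !Cf_empty.
have C1 : mu <= Cf m A B by apply: Cf_ge => //; exists f.
have C2 : Cf m A B <= Cf m' A B.
  apply: Cf_ge; first by exists f.
  move=> g Hg; apply: le_trans (Cf_le m Hg) _; exact: energy_mono.
have C0 : 0 < Cf m A B by apply: lt_le_trans C1.
by rewrite lef_pV2 ?posrE //; apply: lt_le_trans C2.
Qed.

End Resist.

Section Conv.
Variable R : realType.

Lemma eventually_lt (u : R ^nat) (l e : R) : u @ \oo --> l -> 0 < e ->
  exists N, forall n, (N <= n)%N -> `|l - u n| < e.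
Proof. by move=> /cvgrPdist_lt H e0; have [N _ HN] := H e e0; exists N => n; apply: HN. Qed.

Lemma diag_cvg (x : nat -> nat -> R) (eta : nat -> R) :
  (forall k m m', (k <= m)%N -> (m <= m')%N -> x m' k <= x m k) ->
  (forall m k, 0 <= x m k) ->
  (forall k n m, (k <= n)%N -> (n <= m)%N -> `|x m k - x m n| <= eta k) ->
  eta @ \oo --> 0 ->
  cvgn (fun n => x n n).
Proof.
move=> Hmono Hpos Htel Heta.
apply/cauchy_cvgP/cauchy_exP => e e0.
have e20 : 0 < e / 2 by rewrite divr_gt0.
have [k Hk] := eventually_lt Heta e20.
have Hk' := Hk k (leqnn k); rewrite sub0r normrN in Hk'.
pose u m := x (m + k)%N k.
have uni : nonincreasing_seq u.
  move=> a b ab; apply: Hmono; first by rewrite leq_addl.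
  by rewrite leq_add2r.
have ulb : has_lbound (range u) by exists 0 => y [m _ <-]; apply: Hpos.
have ucv := nonincreasing_cvgn uni ulb.
set l := inf _ in ucv.
have [N HN] := eventually_lt ucv e20.
exists l; exists (N + k)%N => // n /= Hn.
rewrite -ball_normE /ball_ /=.
have nk : (k <= n)%N by apply: leq_trans Hn; rewrite leq_addl.
have H1 := HN (n - k)%N; rewrite /u subnK // in H1.
have H2 : `|l - x n k| < e / 2 by apply: H1; rewrite leq_subRL // addnC.
have H3 := Htel k n n nk (leqnn n).
have : `|l - x n n| <= `|l - x n k| + `|x n k - x n n| by apply: ler_distD.
have : `|eta k| = eta k by apply: ger0_norm; apply: le_trans (normr_ge0 _) H3.
move=> Ek; rewrite Ek in Hk'.
move=> H4; apply: (le_lt_trans H4).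
rewrite (splitr e); apply: ltr_leD => //; apply: le_trans H3 _; exact: ltW.
Qed.

Lemma same_lim (s s' : R ^nat) (z : R ^nat) :
  cvgn s -> (forall n, `|s n - s' n| <= z n) -> z @ \oo --> 0 ->
  s' @ \oo --> lim (s @ \oo).
Proof.
move=> cs Hz z0; apply/cvgrPdist_lt => e e0.
have e20 : 0 < e / 2 by rewrite divr_gt0.
have [N1 H1] := eventually_lt cs e20.
have [N2 H2] := eventually_lt z0 e20.
exists (maxn N1 N2) => // n /= Hn.
rewrite geq_max in Hn; case/andP: Hn => h1 h2.
have := H1 n h1; have := H2 n h2; rewrite sub0r normrN.
move=> a b.
have : `|lim (s @ \oo) - s' n| <= `|lim (s @ \oo) - s n| + `|s n - s' n| by apply: ler_distD.
move=> c; apply: le_lt_trans c _.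
rewrite (splitr e) ltr_leD //.
apply: le_trans (Hz n) _; apply: le_trans (ler_norm _) _; exact: ltW.
Qed.

End Conv.

Lemma powR_exprn (R : realType) (x a : R) n : 0 <= x -> (x ^+ n) `^ a = (x `^ a) ^+ n.
Proof.
move=> x0; elim: n => [|n IH]; first by rewrite !expr0 powR1.
by rewrite !exprS powRM ?exprn_ge0 // IH.
Qed.

Section Kap.
Variables (R : realType) (d N : nat) (S : 'I_N -> 'rV[R]_d -> 'rV[R]_d)
  (ri : 'I_N -> R) (K : set 'rV[R]_d) (alpha gamma lambda : R).
Hypothesis ri01 : forall i, 0 < ri i < 1.
Hypothesis alpha0 : 0 <= alpha.
Hypothesis lam0 : 0 < lambda.
Hypothesis lamb : lambda < rmin ri `^ alpha.
Hypothesis gam0 : 0 < gamma.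

Local Notation c := (cond S ri K alpha gamma lambda).
Local Notation E := (energy S ri K alpha gamma lambda).
Local Notation Rf := (Reff S ri K alpha gamma lambda).
Local Notation ks := (kappa_seq S ri K).
Local Notation ns := (near_set S ri K alpha gamma lambda).
Local Notation bb := (rmin ri `^ alpha).
Local Notation th := (Num.sqrt (lambda / bb)).
Local Notation T j := (th ^+ j / Num.sqrt bb).
Local Notation img kap X k := ((fun xi => (k, kap k xi)) @` X).

Lemma bb_gt0 : 0 < bb.
Proof. by apply: powR_gt0; apply: rmin_gt0. Qed.

Lemma bb_le1 : bb <= 1.
Proof.
have := @ge0_ler_powR R alpha alpha0 (rmin ri) 1.
rewrite powR1; apply; rewrite ?nnegrE ?rmin_le1 //.
exact/ltW/rmin_gt0.
Qed.

Lemma th_ge0 : 0 <= th. Proof. exact: sqrtr_ge0. Qed.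

Lemma th_lt1 : th < 1.
Proof.
rewrite -sqrtr1 ltr_sqrt ?ltr01 // ltr_pdivrMr ?bb_gt0 // mul1r //.
Qed.

Lemma T_sq j : (T j) ^+ 2 = (lambda / bb) ^+ j / bb.
Proof.
have b0 := bb_gt0.
rewrite expr_div_n -exprM mulnC exprM sqr_sqrtr ?divr_ge0 ?ltW //.
by rewrite sqr_sqrtr // ltW.
Qed.

Lemma T_ge0 j : 0 <= T j.
Proof. by rewrite divr_ge0 ?exprn_ge0 ?sqrtr_ge0. Qed.

Lemma T_gt0 j : 0 < T j.
Proof.
apply: divr_gt0; [apply: exprn_gt0|]; rewrite sqrtr_gt0 ?divr_gt0 ?bb_gt0 //.
Qed.

Lemma T_sq_le j : (T j) ^+ 2 * bb <= 1.
Proof.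
have b0 := bb_gt0.
rewrite T_sq mulrAC -mulrA mulfV ?gt_eqF // mulr1.
apply: exprn_ile1; first by rewrite divr_ge0 ?ltW.
by rewrite ler_pdivrMr // mul1r ltW.
Qed.

Lemma vert_lb w j : inJ ri j.+1 w ->
  1 <= rw ri w `^ alpha * lambda ^- j.+1 * (T j.+1) ^+ 2.
Proof.
move=> Hw; have b0 := bb_gt0.
have H1 : bb ^+ j.+2 <= rw ri w `^ alpha.
  rewrite -powR_exprn; last exact/ltW/rmin_gt0.
  apply: ge0_ler_powR => //; last exact: (inJ_lb ri01 Hw).
    by rewrite nnegrE exprn_ge0 // ltW // rmin_gt0.
  by rewrite nnegrE ltW // rw_gt0.
have -> : 1 = bb ^+ j.+2 * lambda ^- j.+1 * (T j.+1) ^+ 2.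
  rewrite T_sq expr_div_n exprS.
  field; rewrite ?expf_neq0 ?gt_eqF //.
apply: ler_wpM2r; first by rewrite sqr_ge0.
apply: ler_wpM2r => //; by rewrite invr_ge0 exprn_ge0 // ltW.
Qed.

Lemma cond_vert kap xi j : ks kap -> K xi ->
  c (j.+1, kap j.+1 xi) (j, kap j xi) = rw ri (kap j.+1 xi) `^ alpha * lambda ^- j.+1 /\
  c (j, kap j xi) (j.+1, kap j.+1 xi) = rw ri (kap j.+1 xi) `^ alpha * lambda ^- j.+1.
Proof.
move=> Hk Kxi.
have [J1 [P1 _]] := Hk xi Kxi j.
have [J2 _] := Hk xi Kxi j.+1.
have V : vert ri (j.+1, kap j.+1 xi) (j, kap j xi) by [].
have NV : ~ vert ri (j, kap j xi) (j.+1, kap j.+1 xi).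
  by move=> [/= /eqP]; rewrite -addn2 -{1}(addn0 j) eqn_add2l.
split; rewrite /cond.
  by rewrite asboolT.
by rewrite asboolF // asboolT.
Qed.

Lemma near_vert kap X m j : ks kap -> X `<=` K -> (j.+1 <= m)%N ->
  ns m (T j.+1) (img kap X j) (img kap X j.+1) /\
  ns m (T j.+1) (img kap X j.+1) (img kap X j).
Proof.
move=> Hk XK jm.
split => a [xi Xxi <-].
  exists (j.+1, kap j.+1 xi); split; first by exists xi.
  right; have Kxi := XK xi Xxi.
  have [J1 _] := Hk xi Kxi j; have [J2 _] := Hk xi Kxi j.+1.
  split; first by split => //=; apply: ltnW.
  split; first by split.
  have [_ ->] := cond_vert j Hk Kxi; exact: vert_lb.
exists (j, kap j xi); split; first by exists xi.
right; have Kxi := XK xi Xxi.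
have [J1 _] := Hk xi Kxi j; have [J2 _] := Hk xi Kxi j.+1.
split; first by split.
split; first by split => //=; apply: ltnW.
have [-> _] := cond_vert j Hk Kxi; exact: vert_lb.
Qed.

Lemma edist_self (x : 'rV[R]_d) : Defs.edist x x = 0.
Proof.
rewrite /Defs.edist (eq_bigr (fun _ => 0)) ?big1 ?sqrtr0 // => i _.
by rewrite subrr expr0n.
Qed.

Lemma near_horiz kap kap' X m : ks kap -> ks kap' -> X `<=` K ->
  ns m (T m) (img kap X m) (img kap' X m).
Proof.
move=> Hk Hk' XK a [xi Xxi <-].
exists (m, kap' m xi); split; first by exists xi.
have Kxi := XK xi Xxi.
have [J1 [_ [y Ky Hy]]] := Hk xi Kxi m.
have [J2 [_ [y' Ky' Hy']]] := Hk' xi Kxi m.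
have [eq|neq] := eqVneq (kap m xi) (kap' m xi).
  by left; rewrite eq.
right; split; first by split.
split; first by split.
have NV1 : ~ vert ri (m, kap m xi) (m, kap' m xi).
  by move=> [/= /eqP]; rewrite -{1}(addn0 m) -addn1 eqn_add2l.
have NV2 : ~ vert ri (m, kap' m xi) (m, kap m xi).
  by move=> [/= /eqP]; rewrite -{1}(addn0 m) -addn1 eqn_add2l.
have HZ : horiz S ri K gamma (m, kap m xi) (m, kap' m xi).
  split => //; split => /=; first by apply/eqP.
  split => //; split => // e e0.
  exists y, y'; split => //; split => //.
  rewrite Hy Hy' edist_self addr_gt0 // mulr_gt0 // exprn_gt0 //.
  exact: rmin_gt0.
rewrite /cond asboolF // asboolF // asboolT //=.
have b0 := bb_gt0.
rewrite T_sq expr_div_n.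
have -> : bb ^+ m * lambda ^- m * (lambda ^+ m / bb ^+ m / bb) = bb^-1.
  field; rewrite ?expf_neq0 ?gt_eqF //.
by rewrite invf_ge1 // bb_le1.
Qed.

Lemma chain_bound kap xi (f : vertex N -> R) k dl : ks kap -> K xi ->
  (forall j, (j < k)%N -> `|f (j.+1, kap j.+1 xi) - f (j, kap j xi)| <= dl) ->
  `|f (k, kap k xi) - f (0%N, kap 0%N xi)| <= k%:R * dl.
Proof.
move=> Hk Kxi; elim: k => [|k IH] H; first by rewrite subrr normr0 mul0r.
apply: le_trans (ler_distD (f (k, kap k xi)) _ _) _.
have -> : (k.+1)%:R * dl = k%:R * dl + dl :> R by rewrite -addn1 natrD mulrDl mul1r.
have h1 := H k (ltnSn k).
have h2 : `|f (k, kap k xi) - f (0%N, kap 0%N xi)| <= k%:R * dl.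
  by apply: IH => j jk; apply: H; apply: ltn_trans jk _.
lra.
Qed.

Variables (Phi Psi : set 'rV[R]_d).
Hypotheses (PhiK : Phi `<=` K) (PsiK : Psi `<=` K) (Phi0 : Phi !=set0) (Psi0 : Psi !=set0).

Lemma pos kap m k : ks kap -> (k <= m)%N ->
  exists2 mu, 0 < mu & forall f, admissible (img kap Phi k) (img kap Psi k) f ->
    mu <= E m f.
Proof.
move=> Hk km.
have b0 := bb_gt0.
set dl : R := (2 * (k.+1)%:R)^-1.
have dl0 : 0 < dl by rewrite invr_gt0 mulr_gt0 // ltr0n.
exists (2^-1 * (bb * dl ^+ 2)); first by rewrite mulr_gt0 // ?invr_gt0 // mulr_gt0 // exprn_gt0.
move=> f [f1 f0]; rewrite leNgt; apply/negP => Hlt.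
have edge : forall xi, K xi -> forall j, (j < k)%N ->
    `|f (j.+1, kap j.+1 xi) - f (j, kap j xi)| <= dl.
  move=> xi Kxi j jk.
  have [J1 _] := Hk xi Kxi j; have [J2 _] := Hk xi Kxi j.+1.
  have X1 : inX ri m (j.+1, kap j.+1 xi) by split => //=; apply: leq_trans jk km.
  have X2 : inX ri m (j, kap j xi) by split => //=; apply: leq_trans (ltnW jk) km.
  have He := energy_edge S K alpha gamma ri01 lam0 f X1 X2.
  move: He; rewrite (proj1 (cond_vert j Hk Kxi)) => He.
  have Hv := vert_lb J2; have Ht := T_sq_le j.+1.
  set cc := rw ri (kap j.+1 xi) `^ alpha * lambda ^- j.+1 in He Hv.
  set D := f (j.+1, kap j.+1 xi) - f (j, kap j xi) in He *.
  set t2 := T j.+1 ^+ 2 in Hv Ht.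
  have t20 : 0 <= t2 by rewrite /t2 sqr_ge0.
  have cc0 : 0 <= cc by rewrite mulr_ge0 ?powR_ge0 // invr_ge0 exprn_ge0 // ltW.
  have ccb : bb <= cc by nra.
  have D2 : D ^+ 2 <= dl ^+ 2.
    have : cc * D ^+ 2 < bb * dl ^+ 2 by lra.
    have D0 : 0 <= D ^+ 2 by rewrite sqr_ge0.
    nra.
  have nD : `|D| ^+ 2 = D ^+ 2 by rewrite real_normK // num_real.
  have nD0 : 0 <= `|D| by [].
  nra.
have [xi Phixi] := Phi0; have [eta Psieta] := Psi0.
have Kxi := PhiK Phixi; have Keta := PsiK Psieta.
have C1 := chain_bound Hk Kxi (edge xi Kxi).
have C2 := chain_bound Hk Keta (edge eta Keta).
have [J0 _] := Hk xi Kxi 0%N; have [J0' _] := Hk eta Keta 0%N.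
rewrite /= in J0 J0'.
rewrite f1 in C1; last by exists xi.
rewrite f0 in C2; last by exists eta.
rewrite J0 in C1; rewrite J0' in C2.
have : `|1 - 0| <= `|1 - f (0%N, [::])| + `|f (0%N, [::]) - 0| by apply: ler_distD.
rewrite subr0 normr1; rewrite distrC in C2 => Htri.
have E2 : k%:R * dl + k%:R * dl = k%:R / (k.+1)%:R.
  by rewrite /dl; field; rewrite addrC natr1 pnatr_eq0.
have : k%:R / (k.+1)%:R < 1 :> R by rewrite ltr_pdivrMr ?ltr0n // mul1r ltr_nat.
move=> Hk1.
have H3 : 1 <= k%:R * dl + k%:R * dl by apply: (le_trans Htri); exact: lerD C1 C2.
rewrite E2 in H3.
by move: Hk1; rewrite ltNge H3.
Qed.

Local Notation x kap m k := (Num.sqrt (Rf m (img kap Phi k) (img kap Psi k))).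

Lemma x_mono kap k m m' : ks kap -> (k <= m)%N -> (m <= m')%N -> x kap m' k <= x kap m k.
Proof.
move=> Hk km mm'; apply: ler_wsqrtr.
have [mu mu0 Hmu] := pos Hk km.
have := Reff_mono ri01 lam0 mm' mu0 Hmu. by move=> HH; exact: HH.
Qed.

Lemma x_step kap m j : ks kap -> (j.+1 <= m)%N ->
  `|x kap m j - x kap m j.+1| <= 3 * T j.+1.
Proof.
move=> Hk jm.
have [mu mu0 Hmu] := pos Hk (ltnW jm).
have [mu' mu0' Hmu'] := pos Hk jm.
have [A1 A2] := near_vert Hk PhiK jm.
have [B1 B2] := near_vert Hk PsiK jm.
have t0 := T_gt0 j.+1.
have H1 := transfer ri01 lam0 t0 mu0 Hmu A1 B1.
have H2 := transfer ri01 lam0 t0 mu0' Hmu' A2 B2.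
rewrite ler_distl; apply/andP; split; lra.
Qed.

Local Notation C := (3 * th / (Num.sqrt bb * (1 - th))).

Lemma x_tel kap k n m : ks kap -> (k <= n)%N -> (n <= m)%N ->
  `|x kap m k - x kap m n| <= C * th ^+ k - C * th ^+ n.
Proof.
move=> Hk; elim: n => [|n IH].
  by rewrite leqn0 => /eqP -> _; rewrite !subrr normr0.
rewrite leq_eqVlt => /orP[/eqP <- _|]; first by rewrite !subrr normr0.
rewrite ltnS => kn nm.
apply: le_trans (ler_distD (x kap m n) _ _) _.
have H1 := IH kn (ltnW nm).
have H2 := x_step Hk nm.
have -> : C * th ^+ k - C * th ^+ n.+1 =
    (C * th ^+ k - C * th ^+ n) + 3 * (th ^+ n.+1 / Num.sqrt bb).
  have sb : Num.sqrt bb != 0 by rewrite gt_eqF // sqrtr_gt0 bb_gt0.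
  have t1 : 1 - th != 0 by rewrite subr_eq0 eq_sym lt_eqF // th_lt1.
  rewrite exprS; field.
  by rewrite sb t1.
exact: lerD.
Qed.

Lemma x_horiz kap kap' m : ks kap -> ks kap' ->
  `|x kap m m - x kap' m m| <= 3 * T m.
Proof.
move=> Hk Hk'.
have [mu mu0 Hmu] := pos Hk (leqnn m).
have [mu' mu0' Hmu'] := pos Hk' (leqnn m).
have t0 := T_gt0 m.
have H1 := transfer ri01 lam0 t0 mu0 Hmu (near_horiz Hk Hk' PhiK) (near_horiz Hk Hk' PsiK).
have H2 := transfer ri01 lam0 t0 mu0' Hmu' (near_horiz Hk' Hk PhiK) (near_horiz Hk' Hk PsiK).
rewrite ler_distl; apply/andP; split; lra.
Qed.

Lemma x_cvg kap : ks kap -> cvgn (fun n => x kap n n).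
Proof.
move=> Hk.
apply: (@diag_cvg R (fun m k => x kap m k) (fun k => C * th ^+ k)).
- by move=> k m m' km mm'; apply: x_mono.
- by move=> m k; apply: sqrtr_ge0.
- move=> k n m kn nm; apply: le_trans (x_tel Hk kn nm) _.
  rewrite lerBlDr lerDl mulr_ge0 ?exprn_ge0 ?th_ge0 //.
  rewrite divr_ge0 ?mulr_ge0 ?th_ge0 ?sqrtr_ge0 //.
  by rewrite subr_ge0 ltW // th_lt1.
- rewrite -(mulr0 C); apply: cvgMr; apply: cvg_expr.
  by rewrite ger0_norm ?th_ge0 // th_lt1.
Qed.

Lemma x_lim kap kap' : ks kap -> ks kap' ->
  (fun n => x kap' n n) @ \oo --> lim ((fun n => x kap n n) @ \oo).
Proof.
move=> Hk Hk'.
apply: (same_lim (x_cvg Hk) (z := fun n => 3 * T n)).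
  by move=> n; apply: x_horiz.
have -> : (fun n => 3 * T n) = (fun n => (3 / Num.sqrt bb) * th ^+ n).
  by apply: funext => n; rewrite mulrA mulrAC.
rewrite -(mulr0 (3 / Num.sqrt bb)); apply: cvgMr; apply: cvg_expr.
by rewrite ger0_norm ?th_ge0 // th_lt1.
Qed.

End Kap.


Lemma alpha_ge0 (R : realType) (N : nat) (ri : 'I_N -> R) (alpha : R) :
  (2 <= N)%N -> (forall i, 0 < ri i < 1) -> \sum_(i < N) ri i `^ alpha = 1 ->
  0 <= alpha.
Proof.
move=> N2 ri01 sum1; rewrite leNgt; apply/negP => a0.
have H : \sum_(i < N) (1 : R) <= \sum_(i < N) ri i `^ alpha.
  apply: ler_sum => i _.
  have [r0 r1] := andP (ri01 i).
  rewrite -(powRr0 (ri i)); apply: ger_powR; first by rewrite r0 ltW.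
  exact: ltW.
rewrite sum1 sumr_const card_ord in H.
have : (2 : R) <= N%:R by rewrite ler_nat.
move: H; rewrite -[1 *+ N]/(N%:R) => H1 H2.
lra.
Qed.

Unset Implicit Arguments.
Set Strict Implicit.
Set Printing Implicit Defensive.

Theorem theorem4p1 (R : realType) (d N : nat)
    (S : 'I_N -> 'rV[R]_d -> 'rV[R]_d) (ri : 'I_N -> R) (K : set 'rV[R]_d)
    (alpha gamma lambda : R) :
  (2 <= N)%N ->
  (forall i, 0 < ri i < 1) ->
  (forall i, similitude (S i) (ri i)) ->
  OSC S ->
  self_similar_set S K ->
  \sum_(i < N) ri i `^ alpha = 1 ->
  0 < gamma ->
  0 < lambda < rmin ri `^ alpha ->
  forall Phi Psi : set 'rV[R]_d,
    closed Phi -> closed Psi -> Phi `<=` K -> Psi `<=` K ->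
    Phi !=set0 -> Psi !=set0 ->
    exists L : R, forall kappa : nat -> 'rV[R]_d -> seq 'I_N,
      kappa_seq S ri K kappa ->
      (fun n => Rlevel S ri K alpha gamma lambda kappa n Phi Psi) @ \oo --> L.
Proof.
move=> N2 ri01 _ _ _ sum1 gam0 /andP[lam0 lamb] Phi Psi _ _ PhiK PsiK Phi0 Psi0.
have alpha0 := alpha_ge0 N2 ri01 sum1.
have [[kap0 Hk0]|nk] := pselect (exists kap, kappa_seq S ri K kap); last first.
  by exists 0 => kap Hk; exfalso; apply: nk; exists kap.
set l := limn (fun n : nat => Num.sqrt (Reff S ri K alpha gamma lambda n
  [set (n, kap0 n xi) | xi in Phi] [set (n, kap0 n xi) | xi in Psi])).
exists (l * l) => kap Hk.
have H := x_lim ri01 alpha0 lam0 lamb gam0 PhiK PsiK Phi0 Psi0 Hk0 Hk.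
have -> : (fun n => Rlevel S ri K alpha gamma lambda kap n Phi Psi) =
  (fun n => Num.sqrt (Reff S ri K alpha gamma lambda n
     [set (n, kap n xi) | xi in Phi] [set (n, kap n xi) | xi in Psi]) *
   Num.sqrt (Reff S ri K alpha gamma lambda n
     [set (n, kap n xi) | xi in Phi] [set (n, kap n xi) | xi in Psi])).
  apply: funext => n; rewrite -expr2 sqr_sqrtr //.
  exact: Reff_ge0.
exact: (cvgM H H).
Qed.
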